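(* Let $k\in\mathbb N$, $P>0$, and let $F:\mathbb R\to\mathbb C$ be a $1$-periodic integrable function. Suppose that $w\in\mathbb N$ and $Q$ satisfy $1\le Q\le \tfrac12 (P/w)^{k/2}$. Then for every $q\in\mathbb N$ with $(q,w)=1$ one has \[ \int_{\mathfrak M_q(Q,P)}F(\alpha w^k)\,d\alpha = w^{-k}\int_{\mathfrak M_q(Q,P/w)}F(\beta)\,d\beta . \]
   Context: For real $X>0$, $Q\ge1$ and $q\in\mathbb N$ with $q\le Q$, and integers $a$ with $0\le a\le q$, $(a,q)=1$, put $\mathfrak M_{q,a}(Q,X)=\{\alpha\in[0,1):|q\alpha-a|\le QX^{-k}\}$, and let $\mathfrak M_q(Q,X)$ be the union of the sets $\mathfrak M_{q,a}(Q,X)$ over $0\le a\le q$ with $(a,q)=1$. By convention $\mathfrak M_q(Q,X)=\emptyset$ when $q>Q$. *)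

(* Defs.v *)
From HB Require Import structures.
From mathcomp Require Import all_boot all_order all_algebra.
From mathcomp Require Import all_classical all_reals all_analysis.
From mathcomp Require Import complex.
Set Implicit Arguments. Unset Strict Implicit. Unset Printing Implicit Defensive.
Import Order.TTheory GRing.Theory Num.Theory.
Local Open Scope classical_set_scope.
Local Open Scope ring_scope.

Definition Mqa {R : realType} (k q a : nat) (Q X : R) : set R :=
  [set alpha | 0 <= alpha < 1 /\ `|q%:R * alpha - a%:R| <= Q * X ^- k].

Definition Mq {R : realType} (k q : nat) (Q X : R) : set R :=
  if q%:R <= Q then
    \bigcup_(a in [set a : nat | (a <= q)%N /\ coprime a q]) Mqa k q a Q X
  else set0.

Definition cintegral {R : realType} (D : set R) (F : R -> R[i]) : R[i] :=
  (Rintegral (@lebesgue_measure R) D (fun x => complex.Re (F x)) +i*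
   Rintegral (@lebesgue_measure R) D (fun x => complex.Im (F x)))%C.

Definition cintegrable {R : realType} (D : set R) (F : R -> R[i]) : Prop :=
  (@lebesgue_measure R).-integrable D (fun x => (complex.Re (F x))%:E) /\
  (@lebesgue_measure R).-integrable D (fun x => (complex.Im (F x))%:E).

(* Main.v *)
Require Import Defs.
From HB Require Import structures.
From mathcomp Require Import all_boot all_order all_algebra.
From mathcomp Require Import all_classical all_reals all_analysis.
From mathcomp Require Import complex.
From mathcomp Require Import measurable_realfun.
From mathcomp Require Import ring lra zify.
Import Order.TTheory GRing.Theory Num.Theory.
Local Open Scope classical_set_scope.
Local Open Scope ring_scope.

Section affine.
Variable R : realType.
Local Notation leb := (@lebesgue_measure R).
Definition aff (c t : R) : measurableTypeR R -> measurableTypeR R := fun x => c * x + t.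
Lemma maff c t : measurable_fun setT (aff c t).
Proof.
rewrite /aff; apply: measurable_funD => //; apply: measurable_funM => //.
Qed.
Definition affm (c t : R) : measure (measurableTypeR R) R.
refine (pushforward leb (aff c t) : measure (measurableTypeR R) R).
exact: maff.
Defined.

Lemma leb_oc (x y : R) : leb `]x, y]%classic = (if x < y then (y - x)%:E else 0%E).
Proof. rewrite lebesgue_measure_itv /= lte_fin; case: ifP => //. Qed.

Lemma affm_oc (c t x y : R) : 0 < c -> (c%:E * affm c t `]x, y]%classic = leb `]x, y]%classic)%E.
Proof.
move=> c0.
have -> : affm c t `]x, y]%classic = leb `](x - t) / c, (y - t) / c]%classic.
  rewrite /affm /pushforward /=; congr (leb _); apply/seteqP; split => z /=;
  rewrite !in_itv /= /aff.
  by move=> /andP[h1 h2]; rewrite ltr_pdivrMr // ler_pdivlMr // ![z * c]mulrC ltrBlDr lerBrDr h1 h2.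
  by rewrite ltr_pdivrMr // ler_pdivlMr // ![z * c]mulrC ltrBlDr lerBrDr.
rewrite !leb_oc.
have -> : ((x - t) / c < (y - t) / c) = (x < y).
  by rewrite ltr_pM2r ?invr_gt0 // ltrD2r.
case: ifP => _; last by rewrite mule0.
rewrite -EFinM; congr (_%:E).
rewrite -mulrBl mulrCA mulfV ?gt_eqF // mulr1; lra.
Qed.

Lemma affm_leb (c t : R) (A : set R) : 0 < c -> measurable A ->
  leb A = (c%:E * affm c t A)%E.
Proof.
move=> c0 mA.
have := @lebesgue_measure_unique R (mscale (NngNum (ltW c0)) (affm c t)).
move=> -> //.
by move=> X [[x y] _ <-]; rewrite -(affm_oc c t).
Qed.

Lemma muleB_pos (k : R) (x y : \bar R) : 0 < k ->
  (k%:E * (x - y) = k%:E * x - k%:E * y)%E.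
Proof.
move=> k0; have hy : (k%:E * +oo = +oo)%E by rewrite mulry gtr0_sg // mul1e.
have hn : (k%:E * -oo = -oo)%E by rewrite mulrNy gtr0_sg // mul1e.
case: x => [x||]; case: y => [y||]; rewrite /= ?hy ?hn.
- by rewrite -EFinM -EFinD mulrDr mulrN.
all: by rewrite /= ?addeNy ?addNye ?addye ?addey.
Qed.

Lemma cov_ge0 (c t : R) (D : set R) (h : R -> \bar R) : 0 < c -> measurable D ->
  measurable_fun setT h -> (forall y, (0 <= h y)%E) ->
  (\int[leb]_(x in aff c t @^-1` D) h (aff c t x) = (c^-1)%:E * \int[leb]_(y in D) h y)%E.
Proof.
move=> c0 mD mh h0.
have -> : (\int[leb]_(x in aff c t @^-1` D) h (aff c t x) = \int[affm c t]_(y in D) h y)%E.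
  symmetry; exact: (@ge0_integral_pushforward _ _ (measurableTypeR R) (measurableTypeR R) R
     (aff c t) (maff c t) leb D h mD (measurable_funS measurableT (@subsetT _ D) mh) (fun y _ => h0 y)).
have ci0 : 0 <= c^-1 by rewrite invr_ge0 ltW.
rewrite (eq_measure_integral (mscale (NngNum ci0) leb)); last first.
  move=> A mA _; rewrite /mscale /=.
  transitivity ((c^-1)%:E * (c%:E * affm c t A))%E.
    by rewrite muleA -EFinM mulVf ?gt_eqF // mul1e.
  by congr (_ * _)%E; symmetry; exact: (@affm_leb c t A c0 mA).
rewrite ge0_integral_mscale //; exact: (measurable_funS measurableT (@subsetT _ D) mh).
Qed.

Lemma cov (c t : R) (D : set R) (g : R -> R) : 0 < c -> measurable D ->
  measurable_fun setT g ->
  (\int[leb]_(x in aff c t @^-1` D) (g (aff c t x))%:E = (c^-1)%:E * \int[leb]_(y in D) (g y)%:E)%E.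
Proof.
move=> c0 mD mg.
have mG : measurable_fun setT (EFin \o g) by apply/measurable_EFinP.
rewrite integralE [in RHS]integralE.
rewrite (_ : (fun x => (g (aff c t x))%:E) = (EFin \o g) \o aff c t) //.
rewrite funepos_comp funeneg_comp.
have mp : measurable_fun setT (funepos (EFin \o g)) := measurable_funepos mG.
have mn : measurable_fun setT (funeneg (EFin \o g)) := measurable_funeneg mG.
rewrite (@cov_ge0 c t D _ c0 mD mp (fun y => funepos_ge0 _ y)).
rewrite (@cov_ge0 c t D _ c0 mD mn (fun y => funeneg_ge0 _ y)).
by rewrite [RHS]muleB_pos // invr_gt0.
Qed.

End affine.

Section periodic.
Variable R : realType.
Variable f : R -> R.
Hypothesis hf1 : forall x, f (x + 1) = f x.

Lemma fper_nat n x : f (x + n%:R) = f x.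
Proof.
elim: n x => [|n IH] x; first by rewrite addr0.
by rewrite -natr1 addrA hf1 IH.
Qed.

Lemma fper_natN n x : f (x - n%:R) = f x.
Proof. by rewrite -[in RHS](subrK n%:R x) fper_nat. Qed.

Hypothesis hm : measurable_fun (`[0, 1]%classic : set R) f.

Lemma f_meas : measurable_fun setT f.
Proof.
have -> : [set: R] = (\bigcup_n `[n%:R, n%:R + 1[%classic) `|`
                     (\bigcup_n `](- n%:R) - 1, - n%:R]%classic).
  apply/seteqP; split => // x _.
  case: (leP 0 x) => x0.
  - left; exists (Num.truncn x) => //=; rewrite in_itv /=.
    by have /andP[h1 h2] := truncn_itv x0; rewrite h1 natr1.
  - right; have x0' : 0 <= - x by rewrite oppr_ge0 ltW.
    exists (Num.truncn (- x)) => //=; rewrite in_itv /=.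
    have /andP[h1 h2] := truncn_itv x0'.
    rewrite -natr1 in h2; apply/andP; split; lra.
have mA n : measurable (`[n%:R, n%:R + 1[%classic : set R) by exact: measurable_itv.
have mB n : measurable (`](- n%:R) - 1, - n%:R]%classic : set R) by exact: measurable_itv.
apply/measurable_funU; [exact: bigcup_measurable|exact: bigcup_measurable|split].
- apply/measurable_fun_bigcup => // n.
  apply: (@eq_measurable_fun _ _ _ _ _ (f \o (fun x => x - n%:R))).
    by move=> x _; rewrite /= fper_natN.
  apply: (measurable_comp _ _ hm) => //.
  + move=> _ [x /= + <-]; rewrite !in_itv /= => /andP[h1 h2].
    apply/andP; split; lra.
  + apply: measurable_funB => //.
- apply/measurable_fun_bigcup => // n.
  apply: (@eq_measurable_fun _ _ _ _ _ (f \o (fun x => x + n.+1%:R))).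
    by move=> x _; rewrite /= fper_nat.
  apply: (measurable_comp _ _ hm) => //.
  + move=> _ [x /= + <-]; rewrite !in_itv /= -natr1 => /andP[h1 h2].
    apply/andP; split; lra.
  + apply: measurable_funD => //.
Qed.
End periodic.

Section arith.
Local Open Scope nat_scope.
Variables (q cn : nat).
Hypotheses (hq : 0 < q) (hcn : 0 < cn) (hcq : coprime cn q).

Definition bf a := if a == q then q else (a * cn) %% q.
Definition nf a := if a == q then cn.-1 else (a * cn) %/ q.

Lemma bn_eq a : q * nf a + bf a = a * cn.
Proof.
rewrite /bf /nf; case: eqP => [->|_]; first by rewrite -[cn in RHS](prednK hcn) mulnSr.
by rewrite mulnC -divn_eq.
Qed.

Lemma b_le a : bf a <= q.
Proof. rewrite /bf; case: eqP => // _; exact/ltnW/ltn_pmod. Qed.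

Lemma b_q a : bf a = q -> (nf a).+1 = cn.
Proof.
rewrite /bf /nf; case: eqP => [_ _|_ h]; first lia.
by have := ltn_pmod (a * cn) hq; rewrite h ltnn.
Qed.

Lemma b_0 a : a <= q -> coprime a q -> bf a = 0 -> nf a = 0.
Proof.
rewrite /bf /nf; case: eqP => [_ _ _ h|aq aleq cop h]; first lia.
have : q %| a * cn by rewrite /dvdn h.
rewrite Gauss_dvdl; last by rewrite coprime_sym.
case: a aq aleq cop {h} => [|a] aq aleq _ qa; first by rewrite mul0n div0n.
by have := dvdn_leq (ltn0Sn a) qa; lia.
Qed.

Lemma n_lt a : a <= q -> nf a < cn.
Proof.
rewrite /nf; case: eqP => [_ _|aq aleq]; first by rewrite prednK.
by rewrite ltn_divLR // mulnC ltn_pmul2l //; lia.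
Qed.

Lemma bA a : coprime a q -> coprime (bf a) q.
Proof.
rewrite /bf; case: eqP => [<- //|_ h].
by rewrite coprime_modl coprimeMl h hcq.
Qed.

Lemma b_inj a1 a2 : a1 <= q -> a2 <= q -> bf a1 = bf a2 -> a1 = a2.
Proof.
have hlt a : a != q -> (a * cn) %% q < q by move=> _; exact: ltn_pmod.
rewrite /bf; case: eqP => [->|n1]; case: eqP => [->|n2] //.
- move=> _ _ h; have := hlt a2; rewrite -h ltnn; move/eqP: n2 => n2 /(_ n2) //.
- move=> _ _ h; have := hlt a1; rewrite h ltnn; move/eqP: n1 => n1 /(_ n1) //.
have key b1 b2 : b1 <= b2 -> b2 < q -> (b1 * cn) %% q = (b2 * cn) %% q -> b1 = b2.
  move=> le12 lt2 h.
  have : q %| (b2 - b1) * cn.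
    by rewrite mulnBl -eqn_mod_dvd ?leq_mul2r ?le12 ?orbT // h.
  rewrite Gauss_dvdl; last by rewrite coprime_sym.
  case E : (b2 - b1) => [|m]; first lia.
  move=> /(dvdn_leq (ltn0Sn m)); lia.
move=> h1 h2 h.
case: (leqP a1 a2) => l.
- by apply: key => //; lia.
- by apply/esym/key => //; lia.
Qed.
End arith.

Section arcs.
Variable R : realType.

Lemma arc_range (q b n cn : nat) (y r : R) : (0 < q)%N -> r * 4 <= 1 ->
  `|q%:R * y - b%:R| <= r -> (b <= q)%N -> (b = q -> n.+1 = cn) -> (b = 0 -> n = 0)%N ->
  (n < cn)%N ->
  (0 <= y < 1) = (- n%:R <= y < cn%:R - n%:R).
Proof.
move=> q0 r4 hy bq hbq hb0 ncn.
have qR : 0 < q%:R :> R by rewrite ltr0n.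
have := hy; rewrite ler_norml => /andP[h1 h2].
have nc : n%:R + 1 <= cn%:R :> R by rewrite natr1 ler_nat.
have bqR : b%:R <= q%:R :> R by rewrite ler_nat.
apply/idP/idP => /andP[y0 y1]; apply/andP; split.
- have : 0 <= n%:R :> R by [].
  lra.
- lra.
- case: n hb0 hbq ncn nc y0 y1 => [|n] hb0 hbq ncn nc y0 y1; first lra.
  case: b hb0 hbq bq bqR h1 h2 hy => [|b] hb0 hbq bq bqR h1 h2 hy; first by have := hb0 erefl.
  have : 1 <= b.+1%:R :> R by rewrite ler1n.
  nra.
- case: (eqVneq b q) => [e|ne].
  + have := hbq e => e2; rewrite -e2 -natr1 in y1; lra.
  + have : b.+1%:R <= q%:R :> R by rewrite ler_nat ltn_neqAle ne.
    rewrite -natr1 => bq1.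
    nra.
Qed.
End arcs.
Section arcs2.
Variable R : realType.

Lemma rho_eq (k : nat) (Q P w : R) : 0 < P -> 0 < w ->
  Q * (P / w) ^- k = w ^+ k * (Q * P ^- k).
Proof.
move=> P0 w0; rewrite expr_div_n invfM invrK; ring.
Qed.

Lemma Mqa_shift k (q a b n cn : nat) (Q P w x : R) :
  (0 < q)%N -> 0 < P -> 0 < w -> cn%:R = w ^+ k -> (q * n + b = a * cn)%N ->
  Q * (P / w) ^- k * 4 <= 1 -> 0 <= Q ->
  (b <= q)%N -> (b = q -> n.+1 = cn) -> (b = 0 -> n = 0)%N -> (n < cn)%N ->
  Mqa k q a Q P x <-> Mqa k q b Q (P / w) (cn%:R * x + - n%:R).
Proof.
move=> q0 P0 w0 ecn eqn r4 Q0 bq hbq hb0 ncn.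
have c0 : 0 < cn%:R :> R by rewrite ltr0n; lia.
have eqR : q%:R * n%:R + b%:R = a%:R * cn%:R :> R by rewrite -!natrM -natrD eqn.
have key : q%:R * (cn%:R * x + - n%:R) - b%:R = cn%:R * (q%:R * x - a%:R) :> R.
  have -> : b%:R = a%:R * cn%:R - q%:R * n%:R :> R by rewrite -eqR; ring.
  ring.
rewrite /Mqa /= key normrM (gtr0_norm c0) rho_eq // -ecn ler_pM2l //.
have rho0 : 0 <= Q * P ^- k by rewrite mulr_ge0 // invr_ge0 exprn_ge0 // ltW.
split => [[/andP[x0 x1] hx]|[hy hx]]; split => //.
- rewrite (@arc_range R q b n cn _ (Q * (P / w) ^- k)) //.
    apply/andP; split; nra.
  by rewrite key normrM (gtr0_norm c0) rho_eq // -ecn ler_pM2l.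
- move: hy; rewrite (@arc_range R q b n cn _ (Q * (P / w) ^- k)) //.
    move=> /andP[y0 y1]; apply/andP; split; nra.
  by rewrite key normrM (gtr0_norm c0) rho_eq // -ecn ler_pM2l.
Qed.
End arcs2.
Section arcs3.
Variable R : realType.

Lemma Mqa_disj k (q i j : nat) (Q X x : R) : (0 < q)%N -> Q * X ^- k * 2 < 1 ->
  Mqa k q i Q X x -> Mqa k q j Q X x -> i = j.
Proof.
rewrite /Mqa /=; move: (Q * X ^- k) => r.
move=> q0 r2 [_ /[dup] hi +] [_ /[dup] hj +]; rewrite !ler_norml => /andP[a1 a2] /andP[b1 b2].
case: (ltngtP i j) => // l.
- have : i%:R + 1 <= j%:R :> R by rewrite natr1 ler_nat.
  move=> h; exfalso; clear l hi hj q0; lra.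
- have : j%:R + 1 <= i%:R :> R by rewrite natr1 ler_nat.
  move=> h; exfalso; clear l hi hj q0; lra.
Qed.

Lemma Mqa_meas k (q a : nat) (Q X : R) : (0 < q)%N -> measurable (Mqa k q a Q X).
Proof.
move=> q0; have qR : 0 < q%:R :> R by rewrite ltr0n.
rewrite /Mqa; move: (Q * X ^- k) => r.
have -> : [set alpha | 0 <= alpha < 1 /\ `|q%:R * alpha - a%:R| <= r] =
   `[0, 1[%classic `&` `[(a%:R - r) / q%:R, (a%:R + r) / q%:R]%classic.
  apply/seteqP; split => x; rewrite /= !in_itv /= ler_norml.
  - move=> [-> /andP[h1 h2]]; rewrite ler_pdivrMr // ler_pdivlMr //; split => //.
    apply/andP; split; lra.
  - move=> [-> /andP[]]; rewrite ler_pdivrMr // ler_pdivlMr // => h1 h2; split => //.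
    apply/andP; split; lra.
by apply: measurableI; exact: measurable_itv.
Qed.
End arcs3.
Section bound.
Variable R : realType.
Lemma rho_bound (k : nat) (Q X : R) : 0 < X -> 1 <= Q ->
  Q <= 2^-1 * powR X (k%:R / 2) -> Q * X ^- k * 4 <= 1.
Proof.
move=> X0 Q1 hQ.
set s := powR X (k%:R / 2).
have s0 : 0 <= s by exact: powR_ge0.
have ss : s ^+ 2 = X ^+ k.
  rewrite -powR_mulrn // -powRrM -powR_mulrn ?ltW //; congr (powR _ _).
  by rewrite -mulrA mulVf // mulr1.
have Xk : 0 < X ^+ k by rewrite exprn_gt0.
rewrite -mulrA mulrC -mulrA ler_pdivrMl // mulr1 -ss.
have hQ' : 2 * Q <= s.
  have t2 : (2^-1 : R) * 2 = 1 by rewrite mulVf.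
  have hQs : Q <= 2^-1 * s by exact: hQ.
  move: hQs t2; move: (2^-1 : R) => t; nra.
have : 2 <= s by nra.
nra.
Qed.
End bound.

Section sums.
Variable R : realType.
Lemma muleD_pos (k : R) (x y : \bar R) : 0 < k ->
  (k%:E * (x + y) = k%:E * x + k%:E * y)%E.
Proof.
move=> k0; have := @muleB_pos R k x (- y)%E k0.
by rewrite oppeK muleN oppeK.
Qed.

Lemma sum_mule_pos (k : R) (s : seq nat) (F : nat -> \bar R) : 0 < k ->
  (\sum_(a <- s) (k%:E * F a) = k%:E * \sum_(a <- s) F a)%E.
Proof.
move=> k0; elim: s => [|a s IH]; first by rewrite !big_nil mule0.
by rewrite !big_cons IH muleD_pos.
Qed.

Lemma fine_mul_pos (k : R) (Y : \bar R) : 0 < k -> fine (k%:E * Y)%E = k * fine Y.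
Proof.
move=> k0; case: Y => [y||] /=; first by [].
- by rewrite mulry gtr0_sg // mul1e mulr0.
- by rewrite mulrNy gtr0_sg // mul1e mulr0.
Qed.
End sums.

Section main.
Variable R : realType.
Local Notation leb := (@lebesgue_measure R).

Lemma main_real (k : nat) (P : R) (f : R -> R) (hP : 0 < P)
  (hf1 : forall x, f (x + 1) = f x) (hm : measurable_fun (`[0, 1]%classic : set R) f)
  (w : nat) (hw : (0 < w)%N) (Q : R)
  (hQ1 : 1 <= Q) (hQ2 : Q <= 2^-1 * powR (P / w%:R) (k%:R / 2))
  (q : nat) (hq : (0 < q)%N) (hqw : coprime q w) :
  Rintegral leb (Mq k q Q P) (fun alpha => f (alpha * w%:R ^+ k))
  = (w%:R ^+ k)^-1 * Rintegral leb (Mq k q Q (P / w%:R)) f.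
Proof.
set cn := (w ^ k)%N.
have ecn : cn%:R = w%:R ^+ k :> R by rewrite natrX.
have cn0 : (0 < cn)%N by rewrite expn_gt0 hw.
have hcq : coprime cn q by rewrite coprimeXl // coprime_sym.
have c0 : 0 < w%:R ^+ k :> R by rewrite -ecn ltr0n.
have c1 : 1 <= w%:R ^+ k :> R by rewrite -ecn ler1n.
have w0 : 0 < w%:R :> R by rewrite ltr0n.
have r4 : Q * (P / w%:R) ^- k * 4 <= 1 := @rho_bound R k Q _ (divr_gt0 hP w0) hQ1 hQ2.
have Q0 : 0 <= Q by apply: le_trans hQ1.
have rho0 : 0 <= Q * P ^- k by rewrite mulr_ge0 // invr_ge0 exprn_ge0 // ltW.
have r2' : Q * (P / w%:R) ^- k * 2 < 1.
  by move: r4; move: (Q * (P / w%:R) ^- k) => r; lra.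
have r2 : Q * P ^- k * 2 < 1.
  move: r2'; rewrite rho_eq //; move: (Q * P ^- k) (w%:R ^+ k) rho0 c1 => r c; nra.
have fm : measurable_fun setT f := @f_meas R f hf1 hm.
rewrite /Mq; case: ifP => qQ; last by rewrite !Rintegral_set0 mulr0.
set s := [seq a <- iota 0 q.+1 | coprime a q].
have As : [set a : nat | (a <= q)%N /\ coprime a q] = [set` s].
  apply/seteqP; split => a /=; rewrite mem_filter mem_iota add0n ltnS.
    by move=> [h1 h2]; rewrite h2 /= h1.
  by move=> /andP[h2 /andP[_ h1]].
have us : uniq s by rewrite filter_uniq // iota_uniq.
rewrite As !bigcup_seq /Rintegral.
have mM X i : measurable (Mqa k q i Q X) := @Mqa_meas R k q i Q X hq.
have tM X : Q * X ^- k * 2 < 1 -> trivIset [set` s] (fun i => Mqa k q i Q X).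
  move=> h i j _ _ [x [hi hj]]; exact: (@Mqa_disj R k q i j Q X x hq h hi hj).
have mf1 : measurable_fun setT (EFin \o (fun x => f (x * w%:R ^+ k))).
  apply/measurable_EFinP; apply: measurableT_comp fm _.
  exact: measurable_funM.
have mf2 : measurable_fun setT (EFin \o f) by apply/measurable_EFinP.
rewrite (@integral_bigsetU_EFin _ _ R leb nat (fun i => Mqa k q i Q P)
   (fun x => f (x * w%:R ^+ k)) s (mM P) us (tM P r2) (measurable_funTS mf1)).
rewrite (@integral_bigsetU_EFin _ _ R leb nat (fun i => Mqa k q i Q (P / w%:R))
   f s (mM _) us (tM _ r2') (measurable_funTS mf2)).
have ci0 : 0 < (w%:R ^+ k)^-1 :> R by rewrite invr_gt0.
rewrite -fine_mul_pos //; congr fine.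
rewrite -sum_mule_pos //.
have ains a : (a \in s) = (a <= q)%N && coprime a q.
  by rewrite mem_filter mem_iota add0n ltnS andbC.
have inj : {in s &, injective (bf q cn)}.
  move=> a1 a2; rewrite !ains => /andP[h1 _] /andP[h2 _].
  exact: b_inj.
have sub : {subset map (bf q cn) s <= s}.
  move=> x /mapP[a]; rewrite ains => /andP[h1 h2] ->.
  by rewrite ains b_le //= bA.
have szl : (size s <= size (map (bf q cn) s))%N by rewrite size_map.
have [_ eqm] := uniq_min_size (etrans (map_inj_in_uniq inj) us) sub szl.
have pm : perm_eq (map (bf q cn) s) s.
  by apply: uniq_perm => //; rewrite map_inj_in_uniq.
rewrite -[RHS](perm_big _ pm) big_map.
apply: eq_big_seq => a; rewrite ains => /andP[aq cop].
set b := bf q cn a; set n := nf q cn a.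
have eset : Mqa k q a Q P = aff R cn%:R (- n%:R) @^-1` Mqa k q b Q (P / w%:R).
  apply/seteqP; split => x /=; rewrite /aff;
  apply (@Mqa_shift R k q a b n cn Q P w%:R x hq hP w0 ecn (@bn_eq q cn cn0 a) r4 Q0
     (@b_le q cn hq a) (@b_q q cn hq cn0 hcq a) (@b_0 q cn hq cn0 hcq a aq cop) (@n_lt q cn hq cn0 hcq a aq)).
rewrite eset.
have cn0R : 0 < cn%:R :> R by rewrite ltr0n.
transitivity (\int[leb]_(x in aff R cn%:R (- n%:R) @^-1` Mqa k q b Q (P / w%:R))
   ((fun y => f (y + n%:R)) (aff R cn%:R (- n%:R) x))%:E)%E.
  by apply: eq_integral => x _; rewrite /aff /= subrK mulrC ecn.
have mg : measurable_fun setT (fun y : R => f (y + n%:R)).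
  apply: measurableT_comp fm _; exact: measurable_funD.
etransitivity; first exact: (@cov R cn%:R (- n%:R) _ (fun y => f (y + n%:R)) cn0R (mM _ _) mg).
rewrite ecn; congr (_ * _)%E.
by apply: eq_integral => y _; rewrite fper_nat.
Qed.
End main.

Theorem lemma2p3 (R : realType) (k : nat) (P : R) (F : R -> R[i])
  (hP : 0 < P)
  (hper : forall x : R, F (x + 1) = F x)
  (hint : cintegrable `[0, 1]%classic F)
  (w : nat) (hw : (0 < w)%N) (Q : R)
  (hQ1 : 1 <= Q) (hQ2 : Q <= 2^-1 * powR (P / w%:R) (k%:R / 2))
  (q : nat) (hq : (0 < q)%N) (hqw : coprime q w) :
  cintegral (Mq k q Q P) (fun alpha => F (alpha * w%:R ^+ k))
  = (((w%:R ^+ k)^-1)%:C)%C * cintegral (Mq k q Q (P / w%:R)) F.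
Proof.
have [hR hI] := hint.
have mR : measurable_fun (`[0, 1]%classic : set R) (fun x => complex.Re (F x)).
  by apply/measurable_EFinP; exact: (measurable_int _ hR).
have mI : measurable_fun (`[0, 1]%classic : set R) (fun x => complex.Im (F x)).
  by apply/measurable_EFinP; exact: (measurable_int _ hI).
have pR x : complex.Re (F (x + 1)) = complex.Re (F x) by rewrite hper.
have pI x : complex.Im (F (x + 1)) = complex.Im (F x) by rewrite hper.
rewrite /cintegral.
rewrite (@main_real R k P (fun x => complex.Re (F x)) hP pR mR w hw Q hQ1 hQ2 q hq hqw).
rewrite (@main_real R k P (fun x => complex.Im (F x)) hP pI mI w hw Q hQ1 hQ2 q hq hqw).
by apply/eqP; rewrite eq_complex /= !mul0r subr0 addr0 !eqxx.
Qed.
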